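(* Let $f$ be a loopless $(k,n)$-bounded affine permutation and let $f^\downarrow(p)=f(p-1)$ ($p\in\mathbb Z$), a $(k-1,n)$-bounded affine permutation. Then: (i) the reduced strand diagram of $f$ is connected (i.e. $G^\times_f$ is connected) if and only if both $G^H_f$ and $G^H_{f^\downarrow}$ are connected; (ii) the partition of $[n]$ into connected components of $G^\times_f$ is the common refinement of the partitions into connected components of $G^H_f$ and of $G^H_{f^\downarrow}$; i.e. $p,q\in[n]$ lie in the same component of $G^\times_f$ iff they lie in the same component of $G^H_f$ and in the same component of $G^H_{f^\downarrow}$.
   Context: A $(k,n)$-bounded affine permutation is a bijection $f:\mathbb Z\to\mathbb Z$ with $f(j+n)=f(j)+n$, $j\le f(j)\le j+n$, $\sum_{j=1}^n(f(j)-j)=kn$; loopless if $f(p)>p$ for all $p$; $\bar f\in S_n$ is given by $\bar f(p)\equiv f(p)\pmod n$. Place $b_1,\dots,b_n$ clockwise on a circle, with $p^-$ just before and $p^+$ just after $b_p$. For loopless $f$, the reduced strand diagram consists of straight arrows $S_p:s^+\to p^-$, $p\in[n]$, $s=\bar f^{-1}(p)$; distinct $p,q$ form an $f$-crossing if $S_p,S_q$ intersect; $G^\times_f$ is the graph on $[n]$ with edges the $f$-crossing pairs. For any bounded affine permutation $g$, $G^H_g$ is the graph on $[n]$ with an edge $\{p,q\}$ ($p\ne q$) whenever the closed straight segments $[b_s,b_p]$ and $[b_t,b_q]$ intersect, where $\bar g(s)=p$, $\bar g(t)=q$ (a segment may degenerate to a point). *)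

(* Defs.v *)
From Stdlib Require Import Relations.
From mathcomp Require Import all_boot all_order all_algebra.
Set Implicit Arguments. Unset Strict Implicit. Unset Printing Implicit Defensive.
Import Order.TTheory GRing.Theory Num.Theory.
Local Open Scope ring_scope.

Definition bounded_affine (k : int) (n : nat) (f : int -> int) : Prop :=
  [/\ bijective f,
      (forall j : int, f (j + n%:Z) = f j + n%:Z),
      (forall j : int, j <= f j <= j + n%:Z) &
      \sum_(1 <= j < n.+1) (f j%:Z - j%:Z) = k * n%:Z].

Definition loopless (f : int -> int) : Prop := forall p : int, p < f p.

Definition fdown (f : int -> int) : int -> int := fun p => f (p - 1).

(* Convention: the element p of [n] = {1,...,n} is represented by the
   ordinal i : 'I_n with p = i + 1.
   fbarv n f i is the ordinal value (in 0..n-1) of \bar f (i+1), i.e.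
   \bar f (i+1) = fbarv n f i + 1 where \bar f (p) = f(p) mod n in [n]. *)
Definition fbarv (n : nat) (f : int -> int) (i : 'I_n) : nat :=
  `|((f (i.+1)%:Z - 1) %% n%:Z)%Z|%N.

(* Rational parametrisation of the unit circle, traversed clockwise as the
   integer parameter t increases:
   t |-> ((1 - t^2)/(1 + t^2), -2t/(1 + t^2)). *)
Definition circ_pt (R : realFieldType) (t : int) : R * R :=
  let x : R := t%:~R in
  ((1 - x ^+ 2) / (1 + x ^+ 2), - (2 * x) / (1 + x ^+ 2)).

(* For p = i+1 in [n]: b_p at parameter 3p, p^- at 3p-1, p^+ at 3p+1.
   These 3n points are distinct and occur clockwise in the order
   1^-, b_1, 1^+, 2^-, b_2, 2^+, ..., n^-, b_n, n^+. *)
Definition bpt (R : realFieldType) (n : nat) (i : 'I_n) : R * R :=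
  circ_pt R (3 * (i.+1)%:Z).
Definition mpt (R : realFieldType) (n : nat) (i : 'I_n) : R * R :=
  circ_pt R (3 * (i.+1)%:Z - 1).
Definition ppt (R : realFieldType) (n : nat) (i : 'I_n) : R * R :=
  circ_pt R (3 * (i.+1)%:Z + 1).

Definition seg_meet (R : realFieldType) (a b c d : R * R) : Prop :=
  exists l m : R, [/\ 0 <= l <= 1, 0 <= m <= 1,
    a.1 + l * (b.1 - a.1) = c.1 + m * (d.1 - c.1) &
    a.2 + l * (b.2 - a.2) = c.2 + m * (d.2 - c.2)].

(* G^x_f : edge {p,q} iff the strands S_p : s^+ -> p^- and S_q : t^+ -> q^-
   intersect, where \bar f(s) = p, \bar f(t) = q. *)
Definition Gcross (R : realFieldType) (n : nat) (f : int -> int)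
    (p q : 'I_n) : Prop :=
  p != q /\ exists s t : 'I_n,
    [/\ fbarv f s = val p, fbarv f t = val q &
        seg_meet (ppt R s) (mpt R p) (ppt R t) (mpt R q)].

Definition GH (R : realFieldType) (n : nat) (g : int -> int)
    (p q : 'I_n) : Prop :=
  p != q /\ exists s t : 'I_n,
    [/\ fbarv g s = val p, fbarv g t = val q &
        seg_meet (bpt R s) (bpt R p) (bpt R t) (bpt R q)].

Definition same_comp (n : nat) (E : 'I_n -> 'I_n -> Prop) (p q : 'I_n) : Prop :=
  clos_refl_trans 'I_n E p q.

Definition gconnected (n : nat) (E : 'I_n -> 'I_n -> Prop) : Prop :=
  forall p q : 'I_n, same_comp E p q.

Arguments Gcross R n f p q : clear implicits.
Arguments GH R n g p q : clear implicits.

(* Main.v *)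
Require Import Defs.
From Stdlib Require Import Relations Classical.
From mathcomp Require Import all_boot all_order all_algebra.
From mathcomp Require Import ring lra zify.
Import Order.TTheory GRing.Theory Num.Theory.

Module SubP1.
Local Open Scope ring_scope.
Section Geo.
Variable R : realFieldType.

Definition cp (x : R) : R * R :=
  ((1 - x ^+ 2) / (1 + x ^+ 2), - (2 * x) / (1 + x ^+ 2)).

Lemma sq1_gt0 (x : R) : 0 < 1 + x ^+ 2.
Proof. have := sqr_ge0 x; lra. Qed.

Lemma sq1_neq0 (x : R) : 1 + x ^+ 2 != 0.
Proof. by rewrite gt_eqF // sq1_gt0. Qed.

Lemma frac01 (U V : R) : U * V < 0 -> 0 <= U / (U - V) <= 1.
Proof.
move=> h.
have hUV : U - V != 0.
  apply/eqP=> e; have eU : U = V by lra.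
  by move: h; rewrite eU; have := sqr_ge0 V; rewrite expr2; lra.
have hq : 0 < (U - V) ^+ 2 by rewrite exprn_even_gt0 //.
have -> : U / (U - V) = U * (U - V) / (U - V) ^+ 2.
  by field.
apply/andP; split.
  by apply: divr_ge0; [nra | lra].
rewrite ler_pdivrMr //; nra.
Qed.

Lemma geo (a b c d : R) :
  seg_meet (cp a) (cp b) (cp c) (cp d) <->
  a = c \/ a = d \/ b = c \/ b = d \/ (a - c) * (a - d) * (b - c) * (b - d) < 0.
Proof.
have ha := sq1_neq0 a; have hb := sq1_neq0 b;
have hc := sq1_neq0 c; have hd := sq1_neq0 d.
have pa := sq1_gt0 a; have pb := sq1_gt0 b;
have pc := sq1_gt0 c; have pd := sq1_gt0 d.
split.
- case=> l [m [/andP [l0 l1] /andP [m0 m1] e1 e2]].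
  move: e1 e2; rewrite /cp /=.
  set X1 := (1 - a ^+ 2) / (1 + a ^+ 2) + _.
  set X2 := (- (2 * a)) / (1 + a ^+ 2) + _.
  set Y1 := (1 - c ^+ 2) / (1 + c ^+ 2) + _.
  set Y2 := (- (2 * c)) / (1 + c ^+ 2) + _.
  move=> e1 e2.
  have h0 : (a * b - 1) * X1 + (a + b) * X2 + (a * b + 1) = 0.
    rewrite /X1 /X2; field; by rewrite ha hb.
  rewrite e1 e2 in h0.
  set u := (c - a) * (c - b) / (1 + c ^+ 2).
  set v := (d - a) * (d - b) / (1 + d ^+ 2).
  have h1 : (a * b - 1) * Y1 + (a + b) * Y2 + (a * b + 1) = 2 * ((1 - m) * u + m * v).
    rewrite /Y1 /Y2 /u /v; field; by rewrite hc hd.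
  rewrite h1 in h0.
  have huv : u * v <= 0.
    have e : (1 - m) * u + m * v = 0 by lra.
    have e' : (1 - m) * u ^+ 2 + m * (u * v) = 0.
      have -> : (1 - m) * u ^+ 2 + m * (u * v) = u * ((1 - m) * u + m * v) by ring.
      by rewrite e mulr0.
    rewrite leNgt; apply/negP=> hp.
    have hu2 : 0 <= u ^+ 2 by exact: sqr_ge0.
    have hm : m = 0 by nra.
    move: e'; rewrite hm mul0r addr0 subr0 mul1r => /eqP; rewrite expf_eq0 /= => /eqP u0.
    by move: hp; rewrite u0 mul0r ltxx.
  have hP : (a - c) * (a - d) * (b - c) * (b - d) = u * v * ((1 + c ^+ 2) * (1 + d ^+ 2)).
    rewrite /u /v; field; by rewrite hc hd.
  have {}hP : (a - c) * (a - d) * (b - c) * (b - d) <= 0.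
    by rewrite hP; apply: mulr_le0_ge0 => //; apply: mulr_ge0; lra.
  case: (eqVneq a c) => [->|nac]; first by left.
  case: (eqVneq a d) => [->|nad]; first by right; left.
  case: (eqVneq b c) => [->|nbc]; first by right; right; left.
  case: (eqVneq b d) => [->|nbd]; first by right; right; right; left.
  right; right; right; right; rewrite lt_neqAle hP andbT.
  by rewrite !mulf_eq0 !subr_eq0 (negPf nac) (negPf nad) (negPf nbc) (negPf nbd).
- case=> [->|[->|[->|[->|hP]]]].
  + exists 0, 0; split; [by rewrite lexx ler01|by rewrite lexx ler01|ring|ring].
  + exists 0, 1; split; [by rewrite lexx ler01|by rewrite lexx ler01|ring|ring].
  + exists 1, 0; split; [by rewrite lexx ler01|by rewrite lexx ler01|ring|ring].
  + exists 1, 1; split; [by rewrite lexx ler01|by rewrite lexx ler01|ring|ring].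
  set U := (c - a) * (c - b) * (1 + d ^+ 2).
  set V := (d - a) * (d - b) * (1 + c ^+ 2).
  set U' := (a - c) * (a - d) * (1 + b ^+ 2).
  set V' := (b - c) * (b - d) * (1 + a ^+ 2).
  have hUV : U * V < 0.
    have -> : U * V = (a - c) * (a - d) * (b - c) * (b - d) * ((1 + c ^+ 2) * (1 + d ^+ 2)).
      by rewrite /U /V; ring.
    by rewrite pmulr_llt0 // mulr_gt0.
  have hUV' : U' * V' < 0.
    have -> : U' * V' = (a - c) * (a - d) * (b - c) * (b - d) * ((1 + a ^+ 2) * (1 + b ^+ 2)).
      by rewrite /U' /V'; ring.
    by rewrite pmulr_llt0 // mulr_gt0.
  have nUV : U - V != 0.
    apply/eqP=> e; have eU : U = V by lra.
    by move: hUV; rewrite eU; have := sqr_ge0 V; rewrite expr2; lra.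
  have nUV' : U' - V' != 0.
    apply/eqP=> e; have eU : U' = V' by lra.
    by move: hUV'; rewrite eU; have := sqr_ge0 V'; rewrite expr2; lra.
  exists (U' / (U' - V')), (U / (U - V)); split.
  + exact: frac01.
  + exact: frac01.
  + rewrite /cp /= /U /V /U' /V'. field.
    by rewrite ha hb hc hd -/U -/V -/U' -/V' nUV nUV'.
  + rewrite /cp /= /U /V /U' /V'. field.
    by rewrite ha hb hc hd -/U -/V -/U' -/V' nUV nUV'.
Qed.
End Geo.

Definition btw (a b c : int) : Prop := (a < c /\ c < b) \/ (b < c /\ c < a).
Definition LinZ (a b c d : int) : Prop := a = c \/ a = d \/ b = c \/ b = d \/
  (btw a b c /\ ~ btw a b d) \/ (~ btw a b c /\ btw a b d).
Definition btwN (a b c : nat) : Prop := (a < c /\ c < b)%N \/ (b < c /\ c < a)%N.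
Definition LinN (a b c d : nat) : Prop := a = c \/ a = d \/ b = c \/ b = d \/
  (btwN a b c /\ ~ btwN a b d) \/ (~ btwN a b c /\ btwN a b d).

Lemma mulZ_lt0 (x y : int) : x * y < 0 <-> (0 < x /\ y < 0) \/ (x < 0 /\ 0 < y).
Proof.
case: (ltrgtP x 0) => hx.
- rewrite nmulr_rlt0 //; lia.
- rewrite pmulr_rlt0 //; lia.
- rewrite hx mul0r; lia.
Qed.
Lemma mulZ_gt0 (x y : int) : 0 < x * y <-> (0 < x /\ 0 < y) \/ (x < 0 /\ y < 0).
Proof.
case: (ltrgtP x 0) => hx.
- rewrite nmulr_rgt0 //; lia.
- rewrite pmulr_rgt0 //; lia.
- rewrite hx mul0r; lia.
Qed.

Lemma LinZ_prod (a b c d : int) :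
  (a = c \/ a = d \/ b = c \/ b = d \/ (a - c) * (a - d) * (b - c) * (b - d) < 0)
  <-> LinZ a b c d.
Proof.
rewrite -mulrA mulZ_lt0 !mulZ_lt0 !mulZ_gt0 /LinZ /btw; lia.
Qed.


Lemma geoZ (R : realFieldType) (a b c d : int) :
  seg_meet (circ_pt R a) (circ_pt R b) (circ_pt R c) (circ_pt R d) <-> LinZ a b c d.
Proof.
rewrite -LinZ_prod.
change (seg_meet (cp R a%:~R) (cp R b%:~R) (cp R c%:~R) (cp R d%:~R) <->
  a = c \/ a = d \/ b = c \/ b = d \/ (a - c) * (a - d) * (b - c) * (b - d) < 0).
have E : forall x y : int, (x%:~R = y%:~R :> R) <-> x = y.
  move=> x y; split => [/eqP|->] //; by rewrite eqr_int => /eqP.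
have P : ((a%:~R - c%:~R) * (a%:~R - d%:~R) * (b%:~R - c%:~R) * (b%:~R - d%:~R) < 0 :> R)
   = ((a - c) * (a - d) * (b - c) * (b - d) < 0).
  by rewrite -!intrB -!intrM ltrz0.
apply: iff_trans (geo _ _ _ _ _) _; rewrite P.
split; case=> [h|[h|[h|[h|h]]]].
- by left; apply/E.
- by right; left; apply/E.
- by right; right; left; apply/E.
- by right; right; right; left; apply/E.
- by right; right; right; right.
- by left; rewrite h.
- by right; left; rewrite h.
- by right; right; left; rewrite h.
- by right; right; right; left; rewrite h.
- by right; right; right; right.
Qed.

Lemma remap0 (s p t q : nat) :
  LinZ (3 * (s.+1)%:Z + 1) (3 * (p.+1)%:Z - 1) (3 * (t.+1)%:Z + 1) (3 * (q.+1)%:Z - 1) <->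
  LinN (4 * s + 2) (4 * p) (4 * t + 2) (4 * q).
Proof. rewrite /LinZ /LinN /btw /btwN; lia. Qed.

Lemma remap1 (s p t q : nat) :
  LinZ (3 * (s.+1)%:Z) (3 * (p.+1)%:Z) (3 * (t.+1)%:Z) (3 * (q.+1)%:Z) <->
  LinN (4 * s + 1) (4 * p + 1) (4 * t + 1) (4 * q + 1).
Proof. rewrite /LinZ /LinN /btw /btwN; lia. Qed.

Lemma remap2 (n s s' p t t' q ep eq : nat) : (s < n)%N -> (p < n)%N -> (t < n)%N -> (q < n)%N ->
  (s.+1 = n /\ s' = 0%N \/ (s.+1 < n)%N /\ s' = s.+1) ->
  (t.+1 = n /\ t' = 0%N \/ (t.+1 < n)%N /\ t' = t.+1) ->
  (p = 0%N /\ ep = (4 * n - 1)%N \/ p <> 0%N /\ ep = (4 * p - 1)%N) ->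
  (q = 0%N /\ eq = (4 * n - 1)%N \/ q <> 0%N /\ eq = (4 * q - 1)%N) ->
  LinZ (3 * (s'.+1)%:Z) (3 * (p.+1)%:Z) (3 * (t'.+1)%:Z) (3 * (q.+1)%:Z) <->
  LinN (4 * s + 3) ep (4 * t + 3) eq.
Proof.
move=> h1 h2 h3 h4 h5 h6 h7 h8.
case: h5 => -[? ?]; case: h6 => -[? ?]; case: h7 => -[? ?]; case: h8 => -[? ?]; subst;
split; rewrite /LinZ /LinN /btw /btwN => -[e|[e|[e|[e|[[[g1|g1] g2]|[g2 [g1|g1]]]]]]]; lia.
Qed.

Lemma dir1 (n s p t q ep eq : nat) : (s < n)%N -> (p < n)%N -> (t < n)%N -> (q < n)%N ->
  s <> t -> p <> q ->
  (p = 0%N /\ ep = (4 * n - 1)%N \/ p <> 0%N /\ ep = (4 * p - 1)%N) ->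
  (q = 0%N /\ eq = (4 * n - 1)%N \/ q <> 0%N /\ eq = (4 * q - 1)%N) ->
  LinN (4 * s + 2) (4 * p) (4 * t + 2) (4 * q) ->
  LinN (4 * s + 1) (4 * p + 1) (4 * t + 1) (4 * q + 1) /\
  LinN (4 * s + 3) ep (4 * t + 3) eq.
Proof.
move=> hs hp ht hq hst hpq hep heq H; split; move: H.
- rewrite /LinN /btwN => -[e|[e|[e|[e|[[[h1|h1] h2]|[h2 [h1|h1]]]]]]]; lia.
- case: hep => -[p0 ->]; case: heq => -[q0 ->];
  rewrite /LinN /btwN => -[e|[e|[e|[e|[[[h1|h1] h2]|[h2 [h1|h1]]]]]]]; lia.
Qed.

Definition rot (N k z : nat) : nat := if (k <= z)%N then (z - k)%N else (z + N - k)%N.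

Lemma rotL (N k a b c d : nat) : (k < N)%N -> (a < N)%N -> (b < N)%N -> (c < N)%N -> (d < N)%N ->
  LinN a b c d <-> LinN (rot N k a) (rot N k b) (rot N k c) (rot N k d).
Proof.
move=> *; rewrite /rot.
case: leqP => ?; case: leqP => ?; case: leqP => ?; case: leqP => ?; split;
rewrite /LinN /btwN => -[e|[e|[e|[e|[[[h1|h1] h2]|[h2 [h1|h1]]]]]]]; lia.
Qed.

End SubP1.
Import SubP1.

Module SubP2.
Set Implicit Arguments. Unset Strict Implicit. Unset Printing Implicit Defensive.
Lemma ex_max (P : nat -> Prop) x z0 : P z0 -> z0 < x ->
  exists a, [/\ P a, a < x & forall e, P e -> e < x -> e <= a].
Proof.
move=> Pz zx.
suff H : forall k z, x - z <= k -> P z -> z < x ->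
  exists a, [/\ P a, a < x & forall e, P e -> e < x -> e <= a] by exact: (H (x - z0) z0).
elim=> [|k IH] z hk Pz' zx'; first lia.
case: (classic (exists e, P e /\ z < e < x)) => [[e [Pe /andP [h1 h2]]]|ne].
  by apply: (IH e) => //; lia.
exists z; split => // e Pe ex; case: (leqP e z) => // ze.
by case: ne; exists e; split => //; apply/andP.
Qed.

Lemma ex_min (P : nat -> Prop) y z0 : P z0 -> y < z0 ->
  exists a, [/\ P a, y < a & forall e, P e -> y < e -> a <= e].
Proof.
move=> Pz zx.
suff H : forall k z, z - y <= k -> P z -> y < z ->
  exists a, [/\ P a, y < a & forall e, P e -> y < e -> a <= e] by exact: (H (z0 - y) z0).
elim=> [|k IH] z hk Pz' zx'; first lia.
case: (classic (exists e, P e /\ y < e < z)) => [[e [Pe /andP [h1 h2]]]|ne].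
  by apply: (IH e) => //; lia.
exists z; split => // e Pe ex; case: (leqP z e) => // ze.
by case: ne; exists e; split => //; apply/andP.
Qed.

Lemma card_lt (N a a' c d : nat) : a %% 4 = c -> a' %% 4 = c -> d = (c + 2) %% 4 ->
  a < a' -> a' <= N ->
  #|[set z : 'I_N | (a < z < a') && (z %% 4 == c)]| <
  #|[set z : 'I_N | (a < z < a') && (z %% 4 == d)]|.
Proof.
move=> ha ha' hd haa' ha'N.
case: N ha'N => [|N'] ha'N; first lia.
set C := [set z : 'I_N'.+1 | _ && _].
set D := [set z : 'I_N'.+1 | _ && _].
pose g (z : 'I_N'.+1) : 'I_N'.+1 := inord (z - 2).
have hg : {in C &, injective g}.
  move=> z1 z2; rewrite !inE => /andP [/andP [h1 _] h1'] /andP [/andP [h2 _] h2'] /(congr1 (@nat_of_ord _)).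
  have l1 := ltn_ord z1; have l2 := ltn_ord z2.
  rewrite /g !inordK; [|lia|lia] => e; apply: val_inj => /=; move/eqP: h1'; move/eqP: h2'; lia.
rewrite -(card_in_imset hg); apply: proper_card; apply/properP; split.
  apply/subsetP => x /imsetP [z]; rewrite !inE => /andP [/andP [h1 h2] /eqP h3] ->.
  have l1 := ltn_ord z; rewrite /g inordK; last lia.
  apply/andP; split; [apply/andP; split|]; apply/eqP || idtac; lia.
exists (inord (a' - 2)).
  rewrite inE inordK; last lia.
  apply/andP; split; [apply/andP; split|apply/eqP]; lia.
apply/imsetP => -[z]; rewrite inE => /andP [/andP [h1 h2] /eqP h3] /(congr1 (@nat_of_ord _)).
have l1 := ltn_ord z; rewrite /g !inordK; [lia|lia|lia].
Qed.

Lemma sep n (E : 'I_n -> 'I_n -> Prop) (L : 'I_n -> Prop) p0 q :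
  ~ L p0 -> L q -> (forall y z, ~ L y -> L z -> ~ E y z) -> ~ clos_refl_trans _ E p0 q.
Proof.
move=> Lp Lq H /clos_rt_rtn1_iff c.
suff : ~ L q by [].
elim: c => // y z Eyz _ IH Lz; exact: (H y z IH Lz Eyz).
Qed.




Lemma base6 a u v : 0 < u -> 0 < v -> ~ LinN a 0 u v -> ~ btwN u v a /\ ~ btwN u v 0.
Proof. rewrite /LinN /btwN => h1 h2 nL; split => -[g|g]; lia. Qed.

Lemma step6 u v y1 y2 z1 z2 : ~ btwN u v y1 -> ~ btwN u v y2 -> btwN y1 y2 z1 -> ~ btwN y1 y2 z2 ->
  ~ LinN z1 z2 u v -> ~ btwN u v z1 /\ ~ btwN u v z2.
Proof. rewrite /LinN /btwN => n1 n2 [h|h] n3 nL; split => -[g|g]; lia. Qed.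

Lemma step6' u v y1 y2 z1 z2 : ~ btwN u v y1 -> ~ btwN u v y2 -> ~ btwN y1 y2 z1 -> btwN y1 y2 z2 ->
  ~ LinN z1 z2 u v -> ~ btwN u v z1 /\ ~ btwN u v z2.
Proof. rewrite /LinN /btwN => n1 n2 n3 [h|h] nL; split => -[g|g]; lia. Qed.

Lemma noEA0 u v e : ~ btwN u v e -> minn u v <= e -> e <= maxn u v -> e <> u -> e <> v -> False.
Proof. rewrite /btwN => n h1 h2 h3 h4; lia. Qed.

Lemma fI0 u v a a' : ~ btwN u v a -> ~ btwN u v a' -> a <> v -> a' <> v -> a < u < a' -> a < v < a'.
Proof. rewrite /btwN => n1 n2 h1 h2 /andP [h3 h4]; apply/andP; lia. Qed.

Lemma btwN_sym u v x : btwN u v x -> btwN v u x.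
Proof. by rewrite /btwN => -[h|h]; [right|left]. Qed.

Lemma btwN_top u v N : u < N -> v < N -> ~ btwN u v N.
Proof. rewrite /btwN => h1 h2; lia. Qed.

Lemma pos2 x : x %% 4 = 2 -> 0 < x.
Proof. by case: x. Qed.

Lemma minpos u v : 0 < u -> 0 < v -> 0 < minn u v.
Proof. lia. Qed.

Lemma maxlt u v N : u < N -> v < N -> maxn u v < N.
Proof. lia. Qed.

Lemma aa'0 a a' u v : a < minn u v -> maxn u v < a' -> a < a'.
Proof. lia. Qed.

Lemma qI0 a a' u v : a < minn u v -> maxn u v < a' -> a < u < a'.
Proof. move=> h1 h2; apply/andP; lia. Qed.

Lemma N4 n : (4 * n) %% 4 = 0.
Proof. by rewrite mulnC modnMl. Qed.

Lemma c1a a a' s : a < s < a' -> s %% 4 = 2 -> a' %% 4 = 2 -> a < s + 1 < a'.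
Proof. move=> /andP [h1 h2] h3 h4; apply/andP; lia. Qed.

Lemma c1b a a' t : a < t < a' -> t %% 4 = 0 -> a %% 4 = 0 -> t <> 0 /\ a < t - 1 < a'.
Proof. move=> /andP [h1 h2] h3 h4; split; [|apply/andP]; lia. Qed.

Lemma c1c a a' s : ~ (a < s < a') -> s %% 4 = 2 -> a %% 4 = 0 -> s + 1 < a \/ a' < s + 1.
Proof. move=> h h3 h4; have : ~ ((a < s) && (s < a')) by []; lia. Qed.

Lemma c1d a a' t N : ~ (a < t < a') -> t %% 4 = 0 -> a %% 4 = 0 -> a' %% 4 = 2 -> a' <= N ->
  N %% 4 = 0 -> (if t == 0 then N - 1 else t - 1) < a \/ a' < (if t == 0 then N - 1 else t - 1).
Proof.
move=> h h3 h4 h5 h6 h7; have : ~ ((a < t) && (t < a')) by [].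
case: eqP => e; lia.
Qed.

Lemma c2a a a' s : a < s < a' -> s %% 4 = 2 -> a %% 4 = 2 -> a < s - 1 < a'.
Proof. move=> /andP [h1 h2] h3 h4; apply/andP; lia. Qed.

Lemma c2b a a' t : a < t < a' -> t %% 4 = 0 -> a' %% 4 = 0 -> a < t + 1 < a'.
Proof. move=> /andP [h1 h2] h3 h4; apply/andP; lia. Qed.

Lemma c2c a a' s : ~ (a < s < a') -> s %% 4 = 2 -> a' %% 4 = 0 -> s - 1 < a \/ a' < s - 1.
Proof. move=> h h3 h4; have : ~ ((a < s) && (s < a')) by []; lia. Qed.

Lemma c2d a a' t : ~ (a < t < a') -> t %% 4 = 0 -> a %% 4 = 2 -> t + 1 < a \/ a' < t + 1.
Proof. move=> h h3 h4; have : ~ ((a < t) && (t < a')) by []; lia. Qed.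

Lemma noLinB x1 x2 y1 y2 a a' : a < y1 < a' -> a < y2 < a' ->
  (x1 < a \/ a' < x1) -> (x2 < a \/ a' < x2) -> ~ LinN x1 x2 y1 y2.
Proof.
move=> /andP [h1 h2] /andP [h3 h4] [h5|h5] [h6|h6];
rewrite /LinN /btwN => -[e|[e|[e|[e|[[[g1|g1] g2]|[g2 [g1|g1]]]]]]]; lia.
Qed.

Section Abs.
Variables (n : nat) (S T : 'I_n -> nat).
Local Notation N := (4 * n).
Hypotheses (SN : forall r, S r < N) (TN : forall r, T r < N)
  (S4 : forall r, S r %% 4 = 2) (T4 : forall r, T r %% 4 = 0)
  (injS : injective S) (injT : injective T)
  (surjS : forall z, z < N -> z %% 4 = 2 -> exists r, S r = z)
  (surjT : forall z, z < N -> z %% 4 = 0 -> exists r, T r = z).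
Variables (E0 E1 E2 : 'I_n -> 'I_n -> Prop).
Definition Gd r := if T r == 0 then N - 1 else T r - 1.
Hypotheses (hE0 : forall r r', E0 r r' <-> r <> r' /\ LinN (S r) (T r) (S r') (T r'))
  (hE1 : forall r r', E1 r r' <-> r <> r' /\ LinN (S r - 1) (T r + 1) (S r' - 1) (T r' + 1))
  (hE2 : forall r r', E2 r r' <-> r <> r' /\ LinN (S r + 1) (Gd r) (S r' + 1) (Gd r')).

Lemma dSS r r' : r <> r' -> S r <> S r'.
Proof. by move=> h e; apply: h; apply: injS. Qed.
Lemma dTT r r' : r <> r' -> T r <> T r'.
Proof. by move=> h e; apply: h; apply: injT. Qed.
Lemma dST r r' : S r <> T r'.
Proof. by move=> e; have := S4 r; have := T4 r'; rewrite e => ->. Qed.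
Arguments dST : clear implicits.

Lemma key p0 q : T p0 = 0 -> clos_refl_trans _ E1 p0 q -> clos_refl_trans _ E2 p0 q ->
  clos_refl_trans _ E0 p0 q.
Proof.
move=> Tp0 c1 c2; apply: NNPP => nAq.
pose A := clos_refl_trans _ E0 p0.
have Ap0 : A p0 by exact: rt_refl.
have Acl : forall y z, A y -> E0 y z -> A z.
  by move=> y z hy hz; apply: rt_trans hy (rt_step _ _ _ _ hz).
have neA : forall r a, ~ A r -> A a -> r <> a by move=> r a h1 h2 e; apply: h1; rewrite e.
have out : forall r, ~ A r -> forall a, A a ->
    ~ btwN (S r) (T r) (S a) /\ ~ btwN (S r) (T r) (T a).
  move=> r nAr a /clos_rt_rtn1_iff c; elim: c.
  - have nE : ~ E0 p0 r by move=> h; apply: nAr; apply: Acl h.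
    have hpr := neA _ _ nAr Ap0.
    have nL : ~ LinN (S p0) (T p0) (S r) (T r) by move=> h; apply: nE; apply/hE0; split => //; apply: not_eq_sym.
    rewrite Tp0 in nL *.
    have hS : 0 < S r := pos2 (S4 r).
    have hT : 0 < T r by rewrite lt0n; apply/eqP => e; apply: (dTT hpr); rewrite e Tp0.
    exact: base6 hS hT nL.
  - move=> y z Eyz cy [IH1 IH2].
    have Ay : A y by apply/clos_rt_rtn1_iff.
    have Az : A z by apply: Acl Eyz.
    have nE : ~ E0 z r by move=> h; apply: nAr; apply: Acl h.
    have [hyz hL] := (hE0 y z).1 Eyz.
    have hrz := neA _ _ nAr Az; have hry := neA _ _ nAr Ay.
    have nL : ~ LinN (S z) (T z) (S r) (T r) by move=> h; apply: nE; apply/hE0; split => //; apply: not_eq_sym.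
    case: hL => [e|[e|[e|[e|[[h1 h2]|[h1 h2]]]]]].
    + by case: (dSS hyz e).
    + by case: (dST y z e).
    + by case: (dST z y (esym e)).
    + by case: (dTT hyz e).
    + exact: step6 IH1 IH2 h1 h2 nL.
    + exact: step6' IH1 IH2 h1 h2 nL.
pose EA e := exists a, A a /\ (S a = e \/ T a = e).
have EAne : forall r e, ~ A r -> EA e -> e <> S r /\ e <> T r.
  move=> r e nAr [b [Ab [<-|<-]]]; have hrb := neA _ _ nAr Ab; split.
  - exact: dSS (not_eq_sym hrb).
  - exact: dST.
  - by move=> e0; apply: (dST r b); rewrite e0.
  - exact: dTT (not_eq_sym hrb).
have EAm : forall e, EA e -> e < N /\ (e %% 4 = 0 \/ e %% 4 = 2).
  move=> e [b [_ [<-|<-]]]; split; [exact: SN| right; exact: S4| exact: TN| left; exact: T4].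
have hqp := neA _ _ nAq Ap0.
have Sq0 := S4 q; have Tq0 := dTT hqp; rewrite Tp0 in Tq0.
set x := minn (S q) (T q); set y := maxn (S q) (T q).
have x0 : 0 < x by apply: minpos; [exact: pos2|rewrite lt0n; apply/eqP].
have EA0 : EA 0 by exists p0; split => //; right.
have [a [EAa ax amax]] := ex_max EA0 x0.
have [a' [EAa' ya' a'min]] : exists a', [/\ EA a' \/ a' = N, y < a' & forall e, EA e -> y < e -> a' <= e].
  case: (classic (exists e, EA e /\ y < e)) => [[e [EAe ye]]|ne].
    have [a' [? ? ?]] := ex_min EAe ye; exists a'; split => //; by left.
  exists N; split => //; [by right| |].
    exact: maxlt (SN q) (TN q).
  by move=> e EAe ye; case: ne; exists e.
have a'N : a' <= N by case: EAa' => [/EAm [h _]|->] //; exact: ltnW.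
have outq := out q nAq.
have noEA : forall e, EA e -> ~ (a < e < a').
  move=> e EAe /andP [h1 h2].
  case: (ltnP e x) => ex; first by move: (amax e EAe ex); rewrite leqNgt h1.
  case: (ltnP y e) => ye; first by move: (a'min e EAe ye); rewrite leqNgt h2.
  have [n1 n2] := EAne q e nAq EAe.
  case: EAe => b [Ab hb]; have [o1 o2] := outq b Ab.
  by case: hb => ?; subst e; [apply: (noEA0 o1) | apply: (noEA0 o2)].
have outE : forall r e, ~ A r -> EA e -> [/\ ~ btwN (S r) (T r) e, e <> S r & e <> T r].
  move=> r e nAr EAe; have [n1 n2] := EAne r e nAr EAe; split => //.
  by case: EAe => b [Ab [<-|<-]]; have [o1 o2] := out r nAr b Ab.
have nAI : forall r, (a < S r < a') \/ (a < T r < a') -> ~ A r.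
  move=> r h Ar; case: h => h.
    by apply: (noEA (S r)) => //; exists r; split => //; left.
  by apply: (noEA (T r)) => //; exists r; split => //; right.
have fI : forall r, (a < S r < a') <-> (a < T r < a').
  move=> r; have hS := SN r; have hT := TN r.
  split => h.
  - have nAr := nAI r (or_introl h).
    have [o1 o2 o3] := outE r a nAr EAa.
    case: EAa' => [EAa'|ea'].
      have [p1 p2 p3] := outE r a' nAr EAa'.
      exact: fI0 o1 p1 o3 p3 h.
    rewrite ea' in h *; apply: (fI0 o1 (btwN_top hS hT) o3 _ h).
    by move=> e; move: hT; rewrite -e ltnn.
  - have nAr := nAI r (or_intror h).
    have [o1 o2 o3] := outE r a nAr EAa.
    have o1' : ~ btwN (T r) (S r) a by move/btwN_sym.
    case: EAa' => [EAa'|ea'].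
      have [p1 p2 p3] := outE r a' nAr EAa'.
      have p1' : ~ btwN (T r) (S r) a' by move/btwN_sym.
      exact: fI0 o1' p1' o2 p2 h.
    rewrite ea' in h *; apply: (fI0 o1' (btwN_top hT hS) o2 _ h).
    by move=> e; move: hS; rewrite -e ltnn.
have am : a %% 4 = 0 \/ a %% 4 = 2 by case: (EAm a EAa).
have a'm : a' %% 4 = 0 \/ a' %% 4 = 2.
  by case: EAa' => [/EAm [_ h]|->]; [exact: h | left; exact: N4].
have aa' : a < a' := aa'0 ax ya'.
have cardS : #|[set z : 'I_N | (a < z < a') && (z %% 4 == 2)]| = #|[set r | a < S r < a']|.
  pose S' r : 'I_N := Ordinal (SN r).
  have -> : [set z : 'I_N | (a < z < a') && (z %% 4 == 2)] = S' @: [set r | a < S r < a'].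
    apply/setP => z; rewrite inE; apply/idP/imsetP.
      case/andP=> h1 /eqP h2; have [r hr] := surjS (ltn_ord z) h2.
      by exists r; [rewrite inE hr | apply: val_inj].
    by case=> r; rewrite inE => h ->; rewrite /= h S4.
  by apply: card_imset => r1 r2 /(congr1 val) /= /injS.
have cardT : #|[set z : 'I_N | (a < z < a') && (z %% 4 == 0)]| = #|[set r | a < T r < a']|.
  pose T' r : 'I_N := Ordinal (TN r).
  have -> : [set z : 'I_N | (a < z < a') && (z %% 4 == 0)] = T' @: [set r | a < T r < a'].
    apply/setP => z; rewrite inE; apply/idP/imsetP.
      case/andP=> h1 /eqP h2; have [r hr] := surjT (ltn_ord z) h2.
      by exists r; [rewrite inE hr | apply: val_inj].
    by case=> r; rewrite inE => h ->; rewrite /= h T4.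
  by apply: card_imset => r1 r2 /(congr1 val) /= /injT.
have cardST : #|[set r | a < S r < a']| = #|[set r | a < T r < a']|.
  by apply: eq_card => r; rewrite !inE; apply/idP/idP => /fI.
have hpar : a %% 4 <> a' %% 4.
  move=> e; case: am => hm.
  - have := card_lt hm (etrans (esym e) hm) (erefl _) aa' a'N; simpl.
    by rewrite cardS cardT cardST ltnn.
  - have := card_lt hm (etrans (esym e) hm) (erefl _) aa' a'N; simpl.
    by rewrite cardS cardT cardST ltnn.
have qI : a < S q < a' := qI0 ax ya'.
have pI : ~ (a < S p0 < a') by move/fI; rewrite Tp0.
have outI : forall r, ~ (a < S r < a') -> ~ (a < S r < a') /\ ~ (a < T r < a').
  by move=> r h; split => // /fI.
case: am => hm.
- have hm' : a' %% 4 = 2 by case: a'm => // h; case: hpar; rewrite hm h.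
  apply: (sep (L := fun r => a < S r < a')) c2 => // u v nu lv.
  move/hE2 => [huv hL]; have [o1 o2] := outI u nu; have lv' := (fI v).1 lv.
  move: hL; apply: (noLinB (a := a) (a' := a')); rewrite /Gd.
  + exact: c1a lv (S4 v) hm'.
  + by have [h0 h] := c1b lv' (T4 v) hm; rewrite ifF //; apply/eqP.
  + exact: c1c o1 (S4 u) hm.
  + exact: c1d o2 (T4 u) hm hm' a'N (N4 n).
- have hm' : a' %% 4 = 0 by case: a'm => // h; case: hpar; rewrite hm h.
  apply: (sep (L := fun r => a < S r < a')) c1 => // u v nu lv.
  move/hE1 => [huv hL]; have [o1 o2] := outI u nu; have lv' := (fI v).1 lv.
  move: hL; apply: (noLinB (a := a) (a' := a')).
  + exact: c2a lv (S4 v) hm.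
  + exact: c2b lv' (T4 v) hm'.
  + exact: c2c o1 (S4 u) hm'.
  + exact: c2d o2 (T4 u) hm.
Qed.
End Abs.

End SubP2.
Import SubP2.

Set Implicit Arguments. Unset Strict Implicit. Unset Printing Implicit Defensive.

Module SubInst.
Local Open Scope ring_scope.
Section Inst.
Variables (n : nat) (k : int) (f : int -> int).
Hypothesis hf : bounded_affine k n f.
Hypothesis hl : loopless f.

Lemma f_inj : injective f. Proof. by case: hf => /bij_inj. Qed.
Lemma f_per j : f (j + n%:Z) = f j + n%:Z. Proof. by case: hf. Qed.
Lemma f_bnd j : j <= f j <= j + n%:Z. Proof. by case: hf. Qed.

Lemma fbarvE (s : 'I_n) : (fbarv f s)%:Z =
  if f (s.+1)%:Z <= n%:Z then f (s.+1)%:Z - 1 else f (s.+1)%:Z - 1 - n%:Z.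
Proof.
have hs := ltn_ord s.
have /andP [b1 b2] := f_bnd (s.+1)%:Z.
have l1 := hl (s.+1)%:Z.
rewrite /fbarv gez0_abs; last by apply: modz_ge0; lia.
case: ifP => h.
- by rewrite modz_small //; lia.
- have -> : f (s.+1)%:Z - 1 = (f (s.+1)%:Z - 1 - n%:Z) + n%:Z by ring.
  rewrite modzDr modz_small //; lia.
Qed.

Lemma fbarv_lt (s : 'I_n) : (fbarv f s < n)%N.
Proof.
have hs := ltn_ord s.
have /andP [b1 b2] := f_bnd (s.+1)%:Z.
have l1 := hl (s.+1)%:Z.
move: (fbarvE s); case: ifP => h e; lia.
Qed.

Definition sig (s : 'I_n) : 'I_n := Ordinal (fbarv_lt s).

Lemma sig_inj : injective sig.
Proof.
move=> s t /(congr1 (fun x : 'I_n => (x : nat)%:Z)) /=; rewrite !fbarvE => e.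
have hs := ltn_ord s; have ht := ltn_ord t.
have /andP [b1 b2] := f_bnd (s.+1)%:Z; have l1 := hl (s.+1)%:Z.
have /andP [c1 c2] := f_bnd (t.+1)%:Z; have l2 := hl (t.+1)%:Z.
have [h|[h|h]] : f (s.+1)%:Z = f (t.+1)%:Z \/ f (s.+1)%:Z = f (t.+1)%:Z + n%:Z \/
                 f (t.+1)%:Z = f (s.+1)%:Z + n%:Z.
  by move: e; case: ifP; case: ifP; lia.
- by apply: ord_inj; have := f_inj h; lia.
- by rewrite -f_per in h; have := f_inj h; lia.
- by rewrite -f_per in h; have := f_inj h; lia.
Qed.

Definition sigi := invF sig_inj.
Lemma sigiK p : sig (sigi p) = p. Proof. exact: f_invF. Qed.
Lemma sigKi s : sigi (sig s) = s. Proof. exact: invF_f. Qed.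

Lemma fbarv_eq (s p : 'I_n) : fbarv f s = p <-> s = sigi p.
Proof.
split => [e|->].
- by rewrite -[s]sigKi; congr sigi; apply: val_inj.
- by have := congr1 val (sigiK p).
Qed.

Definition prvn (i : nat) : nat := if i == 0%N then n.-1 else i.-1.
Lemma prv_lt (i : 'I_n) : (prvn i < n)%N.
Proof. have := ltn_ord i; rewrite /prvn; case: eqP; lia. Qed.
Definition prv (i : 'I_n) : 'I_n := Ordinal (prv_lt i).

Lemma fbarv_down (i : 'I_n) : fbarv (fdown f) i = fbarv f (prv i).
Proof.
have hi := ltn_ord i.
rewrite /fbarv /fdown /= /prvn.
have -> : (i.+1)%:Z - 1 = i%:Z by lia.
case: eqP => h.
- have -> : (n.-1.+1) = n by lia.
  rewrite h.
  have -> : f n%:Z - 1 = (f 0 - 1) + n%:Z by rewrite -(add0r n%:Z) f_per; ring.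
  by rewrite modzDr.
- by have -> : (i.-1.+1) = i by lia.
Qed.

Definition nxtn (j : nat) : nat := if j.+1 == n then 0%N else j.+1.
Lemma nxt_lt (j : 'I_n) : (nxtn j < n)%N.
Proof. have := ltn_ord j; rewrite /nxtn; case: eqP; lia. Qed.
Definition nxt (j : 'I_n) : 'I_n := Ordinal (nxt_lt j).

Lemma prv_eq (s j : 'I_n) : prv s = j <-> s = nxt j.
Proof.
have hs := ltn_ord s; have hj := ltn_ord j.
split => [e|->].
- apply: ord_inj => /=; move/(congr1 (@nat_of_ord _)): e => /=; rewrite /prvn /nxtn.
  by case: (eqVneq (s : nat) 0%N) => h1; case: (eqVneq (j.+1) n) => h2 e; lia.
- apply: ord_inj => /=; rewrite /prvn /nxtn.
  by case: (eqVneq (j.+1) n) => h2 /=; lia.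
Qed.

Lemma fbarv_down_eq (s p : 'I_n) : fbarv (fdown f) s = p <-> s = nxt (sigi p).
Proof. by rewrite fbarv_down; apply: iff_trans (fbarv_eq _ _) (prv_eq _ _). Qed.

Variable R : realFieldType.

Lemma G0 (p q : 'I_n) : Gcross R n f p q <->
  p <> q /\ LinN (4 * sigi p + 2) (4 * p) (4 * sigi q + 2) (4 * q).
Proof.
rewrite /Gcross /ppt /mpt; split.
- case=> /eqP npq [s [t [/fbarv_eq hs /fbarv_eq ht hm]]]; split => //.
  rewrite -hs -ht; apply/remap0/geoZ; exact: hm.
- case=> npq h; split; first by apply/eqP.
  exists (sigi p), (sigi q); split; try by apply/fbarv_eq.
  by apply/geoZ/remap0.
Qed.

Lemma G1 (p q : 'I_n) : GH R n f p q <->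
  p <> q /\ LinN (4 * sigi p + 1) (4 * p + 1) (4 * sigi q + 1) (4 * q + 1).
Proof.
rewrite /GH /bpt; split.
- case=> /eqP npq [s [t [/fbarv_eq hs /fbarv_eq ht hm]]]; split => //.
  rewrite -hs -ht; apply/remap1/geoZ; exact: hm.
- case=> npq h; split; first by apply/eqP.
  exists (sigi p), (sigi q); split; try by apply/fbarv_eq.
  by apply/geoZ/remap1.
Qed.

Definition Ep (p : nat) : nat := if p == 0%N then (4 * n - 1)%N else (4 * p - 1)%N.

Lemma Ep_spec (p : 'I_n) : (p = 0 :> nat /\ Ep p = (4 * n - 1)%N \/ p <> 0 :> nat /\ Ep p = (4 * p - 1)%N).
Proof. by rewrite /Ep; case: eqP => h; [left|right]. Qed.

Lemma nxt_spec (s : 'I_n) : ((s : nat).+1 = n /\ nxt s = 0 :> nat \/ ((s : nat).+1 < n)%N /\ nxt s = (s : nat).+1 :> nat).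
Proof. have := ltn_ord s; rewrite /= /nxtn; case: eqP => h; [left|right]; split => //; lia. Qed.

Lemma G2 (p q : 'I_n) : GH R n (fdown f) p q <->
  p <> q /\ LinN (4 * sigi p + 3) (Ep p) (4 * sigi q + 3) (Ep q).
Proof.
have L := @remap2 n (sigi p) (nxt (sigi p)) p (sigi q) (nxt (sigi q)) q (Ep p) (Ep q) (ltn_ord (sigi p)) (ltn_ord p) (ltn_ord (sigi q)) (ltn_ord q)
  (nxt_spec (sigi p)) (nxt_spec (sigi q)) (Ep_spec p) (Ep_spec q).
rewrite /GH /bpt; split.
- case=> /eqP npq [s [t [/fbarv_down_eq hs /fbarv_down_eq ht hm]]]; split => //.
  apply/L; rewrite -hs -ht; apply/geoZ; exact: hm.
- case=> npq h; split; first by apply/eqP.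
  exists (nxt (sigi p)), (nxt (sigi q)); split; try by apply/fbarv_down_eq.
  by apply/geoZ/L.
Qed.

End Inst.

End SubInst.
Import SubInst.

Local Open Scope ring_scope.

Lemma sum_shift (F : nat -> int) m : F 0%N = F m.+1 ->
  \sum_(0 <= i < m.+1) F i = \sum_(0 <= i < m.+1) F i.+1.
Proof. by move=> e; rewrite big_nat_recl // big_nat_recr //= e addrC. Qed.

Lemma bdown n k f : bounded_affine k n f -> loopless f -> bounded_affine (k - 1) n (fdown f).
Proof.
move=> hf hl; have hf' := hf; case: hf' => [[g fg gf] hper hbnd hs]; split.
- exists (fun j => g j + 1).
  + by move=> x; rewrite /fdown fg subrK.
  + by move=> y; rewrite /fdown addrK gf.
- by move=> j; rewrite /fdown addrAC hper.
- move=> j; rewrite /fdown; have := hl (j - 1); have := hbnd (j - 1).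
  move=> /andP [h1 h2] h3; apply/andP; split; lia.
- rewrite big_add1 /= in hs; rewrite big_add1 /=.
  pose F i := f i%:Z - i%:Z.
  have e1 : \sum_(0 <= i < n) (fdown f (i.+1)%:Z - (i.+1)%:Z) = \sum_(0 <= i < n) F i - n%:Z.
    rewrite (eq_bigr (fun i => F i - 1)); last first.
      move=> i _; rewrite /fdown /F; have -> : (i.+1)%:Z - 1 = i%:Z by lia.
      lia.
    by rewrite sumrB sumr_const_nat subn0 natz.
  rewrite e1.
  have e2 : \sum_(0 <= i < n) F i = \sum_(0 <= i < n) F i.+1.
    case: n {hf hbnd hs e1} hper => [|m] hper; first by rewrite !big_geq.
    apply: sum_shift; rewrite /F.
    move: (hper (Posz 0)); have -> : Posz 0 + (m.+1)%:Z = (m.+1)%:Z by [].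
    lia.
  rewrite e2; rewrite /F in hs *; rewrite hs; ring.
Qed.

Lemma and_iff (P A B : Prop) : (A <-> B) -> (P /\ A <-> P /\ B).
Proof. by move=> h; split => -[? ?]; split => //; apply/h. Qed.

Section Rot.
Variables (R : realFieldType) (n : nat) (k : int) (f : int -> int).
Hypotheses (hf : bounded_affine k n f) (hl : loopless f).
Variable p0 : 'I_n.
Local Notation N := (4 * n)%N.
Local Notation si := (sigi hf hl).
Definition Sr r := rot N (4 * p0) (4 * si r + 2).
Definition Tr (r : 'I_n) := rot N (4 * p0) (4 * r).

Lemma si_inj : injective si.
Proof. by move=> x y e; rewrite -(sigiK hf hl x) -(sigiK hf hl y) e. Qed.

Lemma p0N : (4 * p0 < N)%N. Proof. have := ltn_ord p0; lia. Qed.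

Lemma rot_lt z : (z < N)%N -> (rot N (4 * p0) z < N)%N.
Proof. have hp := ltn_ord p0; rewrite /rot; case: (leqP (4 * p0) z); lia. Qed.

Lemma rot_inj a b : (a < N)%N -> (b < N)%N -> rot N (4 * p0) a = rot N (4 * p0) b -> a = b.
Proof. have hp := ltn_ord p0; rewrite /rot; case: (leqP (4 * p0) a); case: (leqP (4 * p0) b); lia. Qed.

Lemma rot_mod z : (z < N)%N -> (rot N (4 * p0) z %% 4 = z %% 4)%N.
Proof.
move=> hz; have h2 := ltn_ord p0; rewrite /rot; case: (leqP (4 * p0) z) => h1.
- have e : z = ((p0 * 4) + (z - 4 * p0))%N by lia.
  by rewrite [in RHS]e modnMDl.
- have e : (z + 4 * n - 4 * p0 = (n - p0) * 4 + z)%N by lia.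
  by rewrite e modnMDl.
Qed.

Lemma rot_surj z : (z < N)%N -> exists z', (z' < N)%N /\ rot N (4 * p0) z' = z /\ (z' %% 4 = z %% 4)%N.
Proof.
have := ltn_ord p0 => hp hz.
case: (ltnP (z + 4 * p0) N) => h.
- exists (z + 4 * p0)%N; rewrite /rot; case: (leqP (4 * p0) (z + 4 * p0)); lia.
- exists (z + 4 * p0 - N)%N; rewrite /rot; case: (leqP (4 * p0) (z + 4 * p0 - N)); lia.
Qed.

Lemma rot_spec z : (4 * p0 <= z /\ rot N (4 * p0) z = z - 4 * p0)%N \/
  (z < 4 * p0 /\ rot N (4 * p0) z = z + N - 4 * p0)%N.
Proof. by rewrite /rot; case: (leqP (4 * p0) z) => h; [left|right]. Qed.

Lemma Sr_lt r : (Sr r < N)%N. Proof. apply: rot_lt; have := ltn_ord (si r); lia. Qed.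
Lemma Tr_lt r : (Tr r < N)%N. Proof. apply: rot_lt; have := ltn_ord r; lia. Qed.
Lemma Sr4 r : (Sr r %% 4 = 2)%N.
Proof. rewrite /Sr rot_mod; have := ltn_ord (si r); lia. Qed.
Lemma Tr4 r : (Tr r %% 4 = 0)%N.
Proof. rewrite /Tr rot_mod; have := ltn_ord r; lia. Qed.
Lemma Sr_inj : injective Sr.
Proof.
move=> x y /rot_inj e; apply: si_inj; apply: ord_inj.
have := ltn_ord (si x); have := ltn_ord (si y) => h1 h2.
have := e ltac:(lia) ltac:(lia); lia.
Qed.
Lemma Tr_inj : injective Tr.
Proof.
move=> x y /rot_inj e; apply: ord_inj.
have := ltn_ord x; have := ltn_ord y => h1 h2.
have := e ltac:(lia) ltac:(lia); lia.
Qed.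
Lemma Sr_surj z : (z < N)%N -> (z %% 4 = 2)%N -> exists r, Sr r = z.
Proof.
move=> hz hm; have [z' [h1 [h2 h3]]] := rot_surj hz.
have hj : (z' %/ 4 < n)%N by lia.
exists (sig hf hl (Ordinal hj)); rewrite /Sr sigKi /= -h2; congr rot; lia.
Qed.
Lemma Tr_surj z : (z < N)%N -> (z %% 4 = 0)%N -> exists r, Tr r = z.
Proof.
move=> hz hm; have [z' [h1 [h2 h3]]] := rot_surj hz.
have hj : (z' %/ 4 < n)%N by lia.
exists (Ordinal hj); rewrite /Tr /= -h2; congr rot; lia.
Qed.

Lemma hE0 r r' : Gcross R n f r r' <-> r <> r' /\ LinN (Sr r) (Tr r) (Sr r') (Tr r').
Proof.
apply: iff_trans (G0 hf hl R r r') _; apply: and_iff; apply: rotL; first exact: p0N.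
all: have := ltn_ord (si r); have := ltn_ord (si r'); have := ltn_ord r; have := ltn_ord r'; lia.
Qed.

Lemma hE1 r r' : GH R n f r r' <->
  r <> r' /\ LinN (Sr r - 1) (Tr r + 1) (Sr r' - 1) (Tr r' + 1).
Proof.
apply: iff_trans (G1 hf hl R r r') _; apply: and_iff.
apply: iff_trans (rotL _ _ _ _ _ _ p0N _ _ _ _) _.
1-4: have := ltn_ord (si r); have := ltn_ord (si r'); have := ltn_ord r; have := ltn_ord r'; lia.
have hp := ltn_ord p0.
have e1 : forall s : 'I_n, rot N (4 * p0) (4 * s + 1) = (rot N (4 * p0) (4 * s + 2) - 1)%N.
  by move=> s; have := ltn_ord s; rewrite /rot; case: (leqP (4 * p0) (4 * s + 1)); case: (leqP (4 * p0) (4 * s + 2)); lia.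
have e2 : forall s : 'I_n, rot N (4 * p0) (4 * s + 1) = (rot N (4 * p0) (4 * s) + 1)%N.
  by move=> s; have := ltn_ord s; rewrite /rot; case: (leqP (4 * p0) (4 * s + 1)); case: (leqP (4 * p0) (4 * s)); lia.
by rewrite /Sr /Tr (e1 (si r)) (e1 (si r')) (e2 r) (e2 r').
Qed.

Lemma hE2 r r' : GH R n (fdown f) r r' <->
  r <> r' /\ LinN (Sr r + 1) (Gd Tr r) (Sr r' + 1) (Gd Tr r').
Proof.
apply: iff_trans (G2 hf hl R r r') _; apply: and_iff.
apply: iff_trans (rotL _ _ _ _ _ _ p0N _ _ _ _) _.
1-4: have := ltn_ord (si r); have := ltn_ord (si r'); have := ltn_ord r; have := ltn_ord r';
  rewrite /Ep; case: (eqVneq (r : nat) 0%N) => ?; case: (eqVneq (r' : nat) 0%N) => ?; lia.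
have hp := ltn_ord p0.
have e1 : forall s : 'I_n, rot N (4 * p0) (4 * s + 3) = (rot N (4 * p0) (4 * s + 2) + 1)%N.
  by move=> s; have := ltn_ord s; rewrite /rot; case: (leqP (4 * p0) (4 * s + 3)); case: (leqP (4 * p0) (4 * s + 2)); lia.
have e2 : forall s : 'I_n, rot N (4 * p0) (Ep n s) = Gd Tr s.
  move=> s; have hs := ltn_ord s.
  case: (Ep_spec s) => -[h1 ->]; rewrite /Gd /Tr; case: ifP => /eqP h2.
  1-4: have := rot_spec (4 * n - 1); have := rot_spec (4 * s - 1); have := rot_spec (4 * s); lia.
by rewrite /Sr !e1 !e2.
Qed.

Lemma dir2 q : same_comp (GH R n f) p0 q -> same_comp (GH R n (fdown f)) p0 q ->
  same_comp (Gcross R n f) p0 q.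
Proof.
apply: (key Sr_lt Tr_lt Sr4 Tr4 Sr_inj Tr_inj Sr_surj Tr_surj hE0 hE1 hE2).
rewrite /Tr /rot leqnn; lia.
Qed.
End Rot.

Lemma crt_mono (T : Type) (E E' : T -> T -> Prop) : (forall x y, E x y -> E' x y) ->
  forall x y, clos_refl_trans T E x y -> clos_refl_trans T E' x y.
Proof.
move=> h x y; elim => [a b /h|a|a b c _ IH1 _ IH2].
- exact: rt_step.
- exact: rt_refl.
- exact: rt_trans IH1 IH2.
Qed.

Lemma edge (R : realFieldType) n k f (hf : bounded_affine k n f) (hl : loopless f) x y :
  Gcross R n f x y -> GH R n f x y /\ GH R n (fdown f) x y.
Proof.
move/(G0 hf hl R) => [nxy h].
have nst : sigi hf hl x <> sigi hf hl y.
  by move=> e; apply: nxy; rewrite -(sigiK hf hl x) e sigiK.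
have nxy' : (x : nat) <> y by move=> e; apply: nxy; apply: ord_inj.
have nst' : (sigi hf hl x : nat) <> sigi hf hl y by move=> e; apply: nst; apply: ord_inj.
have [h1 h2] := @dir1 n (sigi hf hl x) x (sigi hf hl y) y (Ep n x) (Ep n y)
  (ltn_ord _) (ltn_ord x) (ltn_ord _) (ltn_ord y) nst' nxy' (Ep_spec x) (Ep_spec y) h.
by split; [apply/(G1 hf hl R) | apply/(G2 hf hl R)]; split.
Qed.

Unset Implicit Arguments.

Theorem mainTheorem13 (R : realFieldType) (n : nat) (k : int) (f : int -> int) :
  bounded_affine k n f -> loopless f ->
  bounded_affine (k - 1) n (fdown f) /\
  (gconnected (Gcross R n f) <->
     gconnected (GH R n f) /\ gconnected (GH R n (fdown f))) /\
  (forall p q : 'I_n,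
     same_comp (Gcross R n f) p q <->
     same_comp (GH R n f) p q /\ same_comp (GH R n (fdown f)) p q).
Proof.
move=> hf hl.
have D : forall p q : 'I_n, same_comp (Gcross R n f) p q <->
     same_comp (GH R n f) p q /\ same_comp (GH R n (fdown f)) p q.
  move=> p q; split.
  - move=> c; split; apply: crt_mono c => x y /(edge hf hl) [].
    + by [].
    + by [].
  - by case=> c1 c2; apply: (dir2 hf hl c1 c2).
split; first exact: bdown hf hl.
split => //; split.
- by move=> h; split => p q; have [] := (D p q).1 (h p q).
- by case=> h1 h2 p q; apply/D.
Qed.
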